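(* Let $k\ge1$, $\lambda>0$ and $\theta>1$. Then every solution $(x,y)$ with $x,y>0$ of $$x=\lambda\Bigl(\frac{1+x+\theta y}{1+x+y}\Bigr)^k,\qquad y=\lambda\Bigl(\frac{1+\theta x+y}{1+x+y}\Bigr)^k$$ satisfies $x=y$. *)

(* Defs.v *)
From Stdlib Require Import Reals.

(* Main.v *)
Require Import Defs.
From Stdlib Require Import Reals Lra Psatz.
Open Scope R_scope.

Lemma powS_lt (a b : R) (n : nat) : 0 <= b -> b < a -> b ^ S n < a ^ S n.
Proof.
  intros Hb Hba. induction n as [|n IH].
  - simpl. lra.
  - change (b ^ S (S n)) with (b * b ^ S n).
    change (a ^ S (S n)) with (a * a ^ S n).
    assert (0 <= b ^ S n) by (apply pow_le; lra).
    nra.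
Qed.

Lemma side (k : nat) (lambda theta x y : R)
  (hk : (1 <= k)%nat) (hlambda : 0 < lambda) (htheta : 1 < theta)
  (hx : 0 < x) (hy : 0 < y)
  (hxeq : x = lambda * ((1 + x + theta * y) / (1 + x + y)) ^ k)
  (hyeq : y = lambda * ((1 + theta * x + y) / (1 + x + y)) ^ k) :
  ~ x < y.
Proof.
  intro Hxy.
  destruct k as [|k]; [lia|].
  set (D := 1 + x + y) in *.
  assert (HD : 0 < / D) by (apply Rinv_0_lt_compat; unfold D; lra).
  assert (Hb : 0 <= (1 + theta * x + y) / D).
  { unfold Rdiv. apply Rmult_le_pos; nra. }
  assert (Hlt : (1 + theta * x + y) / D < (1 + x + theta * y) / D).
  { unfold Rdiv. apply Rmult_lt_compat_r; nra. }
  pose proof (powS_lt _ _ k Hb Hlt). nra.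
Qed.

Theorem mainTheorem3 (k : nat) (lambda theta x y : R)
  (hk : (1 <= k)%nat) (hlambda : 0 < lambda) (htheta : 1 < theta)
  (hx : 0 < x) (hy : 0 < y)
  (hxeq : x = lambda * ((1 + x + theta * y) / (1 + x + y)) ^ k)
  (hyeq : y = lambda * ((1 + theta * x + y) / (1 + x + y)) ^ k) :
  x = y.
Proof.
  pose proof (side k lambda theta x y hk hlambda htheta hx hy hxeq hyeq).
  assert (~ y < x).
  { apply (side k lambda theta y x hk hlambda htheta hy hx).
    - rewrite hyeq at 1. replace (1 + y + x) with (1 + x + y) by ring.
      replace (1 + y + theta * x) with (1 + theta * x + y) by ring. reflexivity.
    - rewrite hxeq at 1. replace (1 + y + x) with (1 + x + y) by ring.
      replace (1 + theta * y + x) with (1 + x + theta * y) by ring. reflexivity. }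
  lra.
Qed.
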